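(* Let $v\in[2,m-1]$ and let $G\in\binom{[m]\setminus\{v\}}{2d-1}$ with $G=F\cap F'$, where $F$ is an upper facet of $C(m,2d+1)\backslash v$ and $F'$ is a lower facet of $C(m,2d+1)\backslash v$. Then $G$ is a facet of $C([m]\setminus\{v\},2d-1)$.
   Context: For a finite ordered set $V$, an $n$-subset $F\subseteq V$ is a facet of the cyclic polytope $C(V,n)$ iff either every $w\in V\setminus F$ has an even number of elements of $F$ above it, or every such $w$ has an odd number (Gale's evenness criterion). Every facet of $C(m,2d+1)$ is uniquely a disjoint union of pairs $\{i,i+1\}$ of consecutive integers together with exactly one of $1$ or $m$. For $v\in[2,m-1]$, the facets of the vertex figure $C(m,2d+1)\backslash v$ are the sets $F\subseteq[m]\setminus\{v\}$ such that $F\cup\{v\}$ is a facet of $C(m,2d+1)$; $F$ is a lower facet of $C(m,2d+1)\backslash v$ if in this decomposition of $F\cup\{v\}$ the element $v$ is paired with $v+1$, and an upper facet if $v$ is paired with $v-1$. *)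

(* Defs.v *)
From mathcomp Require Import all_boot.
From mathcomp Require Import finmap.
Set Implicit Arguments. Unset Strict Implicit. Unset Printing Implicit Defensive.
Local Open Scope fset_scope.

Definition interval_m (m : nat) : {fset nat} := [fset i | i in iota 1 m].

(* Gale's evenness criterion: F is a facet of the cyclic polytope C(V,n),
   V a finite ordered set (here a finite set of naturals with the usual order). *)
Definition is_facet_cyc (V : {fset nat}) (n : nat) (F : {fset nat}) : Prop :=
  F `<=` V /\ #|` F | = n /\
  ((forall w, w \in V -> w \notin F -> ~~ odd #|` [fset x in F | w < x] |) \/
   (forall w, w \in V -> w \notin F -> odd #|` [fset x in F | w < x] |)).

Definition pair_decomp (m : nat) (F P : {fset nat}) (e : nat) : Prop :=
  (e = 1 \/ e = m) /\
  F = e |` (P `|` [fset i.+1 | i in P]) /\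
  (forall i j, i \in P -> j \in P -> i.+1 != j) /\
  e \notin P /\ e \notin [fset i.+1 | i in P].

Definition vfig_facet (m d v : nat) (F : {fset nat}) : Prop :=
  F `<=` interval_m m `\ v /\ is_facet_cyc (interval_m m) (2 * d + 1) (v |` F).

(* lower facet: in the decomposition of F u {v}, v is paired with v+1 *)
Definition lower_facet (m d v : nat) (F : {fset nat}) : Prop :=
  vfig_facet m d v F /\
  exists P e, pair_decomp m (v |` F) P e /\ v \in P.

(* upper facet: in the decomposition of F u {v}, v is paired with v-1 *)
Definition upper_facet (m d v : nat) (F : {fset nat}) : Prop :=
  vfig_facet m d v F /\
  exists P e, pair_decomp m (v |` F) P e /\ 1 <= v.-1 /\ v.-1 \in P.

(* Main.v *)
Require Import Defs.
From mathcomp Require Import all_boot.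
From mathcomp Require Import finmap.
From Stdlib Require Import Lia.
From mathcomp Require Import zify.
Local Open Scope fset_scope.

Definition cnt (S : {fset nat}) (t : nat) : nat := #|` [fset x in S | t < x] |.

Lemma cnt_U1 x S t : x \notin S -> cnt (x |` S) t = ((t < x) + cnt S t)%N.
Proof.
move=> xS; rewrite /cnt.
have -> : [fset y in x |` S | t < y] =
   (if t < x then x |` [fset y in S | t < y] else [fset y in S | t < y]).
  apply/fsetP => y; case: ifP => tx; rewrite !inE.
    by case: eqP => [->|]; rewrite ?tx ?andbT //.
  by case: eqP => [->|]; rewrite ?tx ?andbF //.
case: ifP => tx //; rewrite cardfsU1 !inE (negbTE xS) //.
Qed.

Lemma cnt_U A B t : [disjoint A & B] -> cnt (A `|` B) t = (cnt A t + cnt B t)%N.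
Proof.
move=> dAB; rewrite /cnt.
have -> : [fset y in A `|` B | t < y] = [fset y in A | t < y] `|` [fset y in B | t < y].
  by apply/fsetP => y; rewrite !inE andb_orl.
rewrite cardfsU.
have -> : [fset y in A | t < y] `&` [fset y in B | t < y] = fset0.
  apply/fsetP => y; rewrite !inE /=.
  case yA: (y \in A) => //=; case yB: (y \in B) => //=; last by rewrite andbF.
  by move/fdisjointP: dAB => /(_ y yA); rewrite yB.
by rewrite cardfs0 subn0.
Qed.

Lemma cnt_succ P t : cnt [fset i.+1 | i in P] t = (cnt P t + (t \in P))%N.
Proof.
rewrite /cnt.
have -> : [fset x in [fset i.+1 | i in P] | t < x] = [fset i.+1 | i in [fset i in P | t <= i]].
  apply/fsetP => y; rewrite !inE; apply/andP/imfsetP.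
    by move=> [/imfsetP [i iP ->] ti]; exists i => //; rewrite !inE iP.
  by move=> [i]; rewrite !inE => /andP [iP ti] ->; split => //; apply/imfsetP; exists i.
rewrite card_imfset /=; last by move=> ? ? [].
case tP: (t \in P).
  have -> : [fset i in P | t <= i] = t |` [fset x in P | t < x].
    apply/fsetP => y; rewrite !inE /= leq_eqVlt.
    by case: (eqVneq y t) => [->|]; rewrite ?tP ?eqxx //= eq_sym => /negbTE ->.
  by rewrite cardfsU1 !inE ltnn andbF addnC.
have -> : [fset i in P | t <= i] = [fset x in P | t < x].
  apply/fsetP => y; rewrite !inE /= leq_eqVlt.
  by case: (eqVneq y t) => [->|]; rewrite ?tP //= eq_sym => /negbTE ->.
by rewrite addn0.
Qed.

Lemma cnt_cut m H P e t : pair_decomp m H P e ->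
  cnt H t = ((t < e) + (cnt P t).*2 + (t \in P))%N.
Proof.
move=> [_ [-> [Pd [eP eP1]]]].
rewrite cnt_U1; last by rewrite !inE negb_or eP.
rewrite cnt_U ?cnt_succ; first by rewrite -addnn !addnA.
apply/fdisjointP => i iP; apply/imfsetP => [[j jP ij]].
by move: (Pd j i jP iP); rewrite ij eqxx.
Qed.

Lemma final (a b v w : nat) (gv gb gw q q' : bool) :
  a != b -> a != v -> b != v -> w != a -> w != b -> w != v ->
  gv (+) (v < a) = q -> gv (+) (v < b) = ~~ q' ->
  gb (+) (b < v) (+) (b < a) = q ->
  gw (+) (w < v) (+) (w < a) = q -> gw (+) (w < v) (+) (w < b) = q' -> gw = gb.
Proof.
move=> /negPf ab /negPf av /negPf bv /negPf wa /negPf wb /negPf wv.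
case: (ltngtP a b) ab => // H1 _; case: (ltngtP a v) av => // H2 _;
case: (ltngtP b v) bv => // H3 _; case: (ltngtP w a) wa => // H4 _;
case: (ltngtP w b) wb => // H5 _; case: (ltngtP w v) wv => // H6 _;
try (exfalso; lia);
case: gv; case: gb; case: gw; case: q; case: q' => //=.
Qed.

Lemma final2 (a b v : nat) (gv gb ga q q' : bool) :
  a != b -> a != v -> b != v ->
  gv (+) (v < a) = q -> gv (+) (v < b) = ~~ q' ->
  gb (+) (b < v) (+) (b < a) = q ->
  ga (+) (a < v) (+) (a < b) = q' -> ga = gb.
Proof.
move=> /negPf ab /negPf av /negPf bv.
case: (ltngtP a b) ab => // H1 _; case: (ltngtP a v) av => // H2 _;
case: (ltngtP b v) bv => // H3 _;
try (exfalso; lia);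
case: gv; case: gb; case: ga; case: q; case: q' => //=.
Qed.

Lemma xor_rot (x y z u s : bool) : x (+) y (+) u = z (+) s -> u (+) x (+) y = z (+) s.
Proof. by case: x; case: y; case: u. Qed.

Theorem lemma4p9 (m d v : nat) (G F F' : {fset nat}) :
  1 <= d -> 2 <= v -> v <= m.-1 ->
  G `<=` interval_m m `\ v -> #|` G | = (2 * d).-1 ->
  upper_facet m d v F -> lower_facet m d v F' ->
  G = F `&` F' ->
  is_facet_cyc (interval_m m `\ v) (2 * d).-1 G.
Proof.
move=> d1 v2 vm GV cG [[FV HF] [P [e [HPd [_ Pv]]]]] [[F'V HF'] [P' [e' [HPd' vP']]]] GE.
have vlt : v < m by lia.
have vF : v \notin F by apply/negP => /(fsubsetP FV); rewrite !inE eqxx.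
have vF' : v \notin F' by apply/negP => /(fsubsetP F'V); rewrite !inE eqxx.
have cF : #|` F| = (2 * d)%N.
  by case: HF => _ [+ _]; rewrite cardfsU1 vF /=; lia.
have cF' : #|` F'| = (2 * d)%N.
  by case: HF' => _ [+ _]; rewrite cardfsU1 vF' /=; lia.
have GF : G `<=` F by rewrite GE fsubsetIl.
have GF' : G `<=` F' by rewrite GE fsubsetIr.
have [a Ha] : exists a, F `\` G = [fset a].
  by apply/cardfs1P; rewrite cardfsDS // cF cG; apply/eqP; lia.
have [b Hb] : exists b, F' `\` G = [fset b].
  by apply/cardfs1P; rewrite cardfsDS // cF' cG; apply/eqP; lia.
have : a \in F `\` G by rewrite Ha inE.
rewrite inE => /andP [aG aF].
have : b \in F' `\` G by rewrite Hb inE.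
rewrite inE => /andP [bG bF'].
have FE : F = a |` G.
  apply/fsetP => y; rewrite !inE; case yG: (y \in G); first by rewrite orbT (fsubsetP GF).
  by have := congr1 (fun S => y \in S) Ha; rewrite /= !inE yG /= orbF.
have F'E : F' = b |` G.
  apply/fsetP => y; rewrite !inE; case yG: (y \in G); first by rewrite orbT (fsubsetP GF').
  by have := congr1 (fun S => y \in S) Hb; rewrite /= !inE yG /= orbF.
have aF' : a \notin F'.
  by apply/negP => aF'; move: aG; rewrite GE inE aF aF'.
have bF : b \notin F.
  by apply/negP => bF; move: bG; rewrite GE inE bF bF'.
have ab : a != b by apply/eqP => ab; move: aF'; rewrite ab bF'.
have av : a != v by apply/eqP => av; move: vF; rewrite -av aF.
have bv : b != v by apply/eqP => bv; move: vF'; rewrite -bv bF'.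
have cH t : cnt (v |` F) t = ((t < v) + (t < a) + cnt G t)%N.
  rewrite {1}FE cnt_U1 ?cnt_U1 ?addnA //; by rewrite -FE.
have cH' t : cnt (v |` F') t = ((t < v) + (t < b) + cnt G t)%N.
  rewrite {1}F'E cnt_U1 ?cnt_U1 ?addnA //; by rewrite -F'E.
have oH t : odd (cnt G t) (+) (t < v) (+) (t < a) = (t < e) (+) (t \in P).
  have := congr1 odd (@cnt_cut _ _ _ _ t HPd); rewrite cH !oddD odd_double !oddb addbF.
  exact: xor_rot.
have oH' t : odd (cnt G t) (+) (t < v) (+) (t < b) = (t < e') (+) (t \in P').
  have := congr1 odd (@cnt_cut _ _ _ _ t HPd'); rewrite cH' !oddD odd_double !oddb addbF.
  exact: xor_rot.
have PH t : t \in P -> t \in v |` F.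
  by case: HPd => _ [-> _] tP; rewrite !inE tP orbT.
have PH' t : t \in P' -> t \in v |` F'.
  by case: HPd' => _ [-> _] tP; rewrite !inE tP orbT.
have eH : e \in v |` F by case: HPd => _ [-> _]; rewrite !inE eqxx.
have eH' : e' \in v |` F' by case: HPd' => _ [-> _]; rewrite !inE eqxx.
have Vm t : t \in interval_m m `\ v -> 0 < t <= m.
  by rewrite inE /interval_m => /andP [_]; rewrite inE /= mem_iota add1n ltnS.
have qt t : 0 < t <= m -> t \notin v |` F -> (t < e) = (v < e).
  move=> tm tH; have te : t != e by apply/eqP => te; move: tH; rewrite te eH.
  have t0 : 0 < t by case/andP: tm.
  case: HPd => [[] ? _]; subst e.
    by rewrite [t < 1]ltnNge [v < 1]ltnNge t0 (ltnW v2).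
  have tlt : t < m by rewrite ltn_neqAle te; case/andP: tm.
  by rewrite tlt vlt.
have qt' t : 0 < t <= m -> t \notin v |` F' -> (t < e') = (v < e').
  move=> tm tH; have te : t != e' by apply/eqP => te; move: tH; rewrite te eH'.
  have t0 : 0 < t by case/andP: tm.
  case: HPd' => [[] ? _]; subst e'.
    by rewrite [t < 1]ltnNge [v < 1]ltnNge t0 (ltnW v2).
  have tlt : t < m by rewrite ltn_neqAle te; case/andP: tm.
  by rewrite tlt vlt.
have nP t : t \notin v |` F -> t \notin P by apply: contra (PH t).
have nP' t : t \notin v |` F' -> t \notin P' by apply: contra (PH' t).
have vP : v \notin P.
  apply/negP => vP; case: HPd => _ [_ [Pd _]]; move: (Pd _ _ Pv vP).
  by rewrite prednK ?eqxx // (ltnW v2).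
have Ev := oH v; rewrite ltnn (negPf vP) addbF /= in Ev.
have Ev' := oH' v; rewrite ltnn vP' addbT /= in Ev'.
rewrite !addbF in Ev Ev'.
have bV : b \in interval_m m `\ v by apply: (fsubsetP F'V).
have aV : a \in interval_m m `\ v by apply: (fsubsetP FV).
have bH : b \notin v |` F by rewrite !inE negb_or bv.
have aH' : a \notin v |` F' by rewrite !inE negb_or av.
have Eb := oH b; rewrite (negPf (nP _ bH)) addbF (qt _ (Vm _ bV) bH) in Eb.
have Ea := oH' a; rewrite (negPf (nP' _ aH')) addbF (qt' _ (Vm _ aV) aH') in Ea.
have key w : w \in interval_m m `\ v -> w \notin G -> odd (cnt G w) = odd (cnt G b).
  move=> wV wG; case: (eqVneq w b) => [->//|wb]; case: (eqVneq w a) => [->|wa].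
    exact: (@final2 _ _ _ _ _ _ _ _ ab av bv Ev Ev' Eb Ea).
  have wv : w != v by move: wV; rewrite !inE; case/andP.
  have wH : w \notin v |` F by rewrite FE !inE !negb_or wv wa.
  have wH' : w \notin v |` F' by rewrite F'E !inE !negb_or wv wb.
  have Ew := oH w; rewrite (negPf (nP _ wH)) addbF (qt _ (Vm _ wV) wH) in Ew.
  have Ew' := oH' w; rewrite (negPf (nP' _ wH')) addbF (qt' _ (Vm _ wV) wH') in Ew'.
  exact: (@final _ _ _ _ _ _ _ _ _ ab av bv wa wb wv Ev Ev' Eb Ew Ew').
split => //; split => //.
case Ob: (odd (cnt G b)); [right|left] => w wV wG; rewrite -/(cnt G w) key // Ob //.
Qed.
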